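(* Let $t$, $l$, $n$ be positive integers with $l < t$, and let $y = \left[\frac{t(n-l+1)-l}{t-l}\right]$. Let $\epsilon = 1$ if $y$ is odd and $\epsilon = 0$ otherwise. Then $R_{t-l,t}(K_{1,n}) > y - \epsilon$.
   Context: $[a]$ denotes the integer part (floor) of a real number $a$. $K_{1,n}$ is the star with $n$ edges. For a graph $G$ and integers $1 \leq s < t$, $R_{s,t}(G)$ is the smallest positive integer $N$ such that every coloring of the edges of the complete graph $K_N$ with $t$ colors contains a (not necessarily induced) subgraph isomorphic to $G$ whose edges use at most $s$ distinct colors. *)

(* Defs.v *)
From mathcomp Require Import all_boot all_order all_algebra.
Set Implicit Arguments. Unset Strict Implicit. Unset Printing Implicit Defensive.

(* A simple graph is given by a finite vertex type V and a symmetric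
   irreflexive edge relation E. *)

Definition star_rel (n : nat) : rel 'I_n.+1 :=
  fun u v => (u != v) && ((val u == 0) || (val v == 0)).

(* An edge coloring of K_N with t colors: each 2-subset of 'I_N gets a
   color in 'I_t (values on other subsets are irrelevant). *)
Definition edge_coloring (N t : nat) := {ffun {set 'I_N} -> 'I_t}.

Definition has_copy_few_colors (V : finType) (E : rel V) (s N t : nat)
  (c : edge_coloring N t) : Prop :=
  exists f : V -> 'I_N, injective f /\
    #|[set c [set f p.1; f p.2] | p in [set p : V * V | E p.1 p.2]]| <= s.

Definition ramsey_prop (V : finType) (E : rel V) (s t N : nat) : Prop :=
  forall c : edge_coloring N t, has_copy_few_colors E s c.

Definition is_R (V : finType) (E : rel V) (s t N : nat) : Prop :=
  0 < N /\ ramsey_prop E s t N /\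
  (forall M, 0 < M -> ramsey_prop E s t M -> N <= M).

(* Main.v *)
Require Import Defs.
From mathcomp Require Import all_boot all_order all_algebra zify.

Definition idx (m u v : nat) : nat :=
  if (u == m) || (v == m) then (2 * (u + v - m)) %% m else (u + v) %% m.

Lemma modD_inj m a b v : a < m -> b < m -> (a + v) %% m = (b + v) %% m -> a = b.
Proof.
move=> am bm /eqP; rewrite eqn_modDr !modn_small //; by move/eqP.
Qed.

Lemma mod2_inj m a b : odd m -> a < m -> b < m -> (2 * a) %% m = (2 * b) %% m -> a = b.
Proof.
wlog ab : a b / a <= b.
  move=> H om am bm e; case: (leqP a b) => h; first exact: H.
  by apply/esym; apply: H => //; apply: ltnW.
move=> om am bm /esym/eqP; rewrite eqn_mod_dvd; last by rewrite leq_mul2l ab orbT.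
rewrite -mulnBr Gauss_dvdr; last by rewrite coprimen2.
case: (posnP (b - a)) => [|p]; first lia.
move=> /(dvdn_leq p) => h; lia.
Qed.

Lemma idx_inj m v u u' : odd m -> v <= m -> u <= m -> u' <= m -> u != v -> u' != v ->
  idx m v u = idx m v u' -> u = u'.
Proof.
move=> om vm um um' uv uv'; rewrite /idx.
have [vE|vN] := eqVneq v m.
  subst v => /=.
  have h1 : u < m by lia.
  have h2 : u' < m by lia.
  rewrite (_ : m + u - m = u); last lia; rewrite (_ : m + u' - m = u'); last lia.
  exact: mod2_inj.
have v1 : v < m by lia.
have [uE|uN] := eqVneq u m; have [uE'|uN'] := eqVneq u' m => //=; try by move=> _; subst.
- move=> e. have h : u' < m by lia. subst u.
  rewrite (_ : v + m - m = v) in e; last lia.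
  rewrite mul2n -addnn in e.
  have := @modD_inj m v u' v v1 h; rewrite [u' + v]addnC => /(_ e); lia.
- move=> e. have h : u < m by lia. subst u'.
  rewrite (_ : v + m - m = v) in e; last lia.
  rewrite mul2n -addnn in e.
  have := @modD_inj m v u v v1 h; rewrite [u + v]addnC => /(_ (esym e)); lia.
- move=> e. have h : u < m by lia. have h' : u' < m by lia.
  rewrite ![v + _]addnC in e. exact: (@modD_inj m u u' v h h' e).
Qed.

Lemma block_count (t q L : nat) (S : seq nat) : uniq S -> L <= t ->
  count (fun k => k %% t \in S) (iota (q * t) L) <= minn (size S) L.
Proof.
move=> uS Lt.
rewrite -[q * t]addn0 iotaDl count_map.
rewrite (@eq_in_count _ _ (mem S)); last first.
  move=> k; rewrite mem_iota add0n => /andP [_ kL].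
  rewrite /= modnMDl modn_small //; apply: leq_trans kL Lt.
rewrite leq_min; apply/andP; split; last by rewrite -[X in _ <= X](size_iota 0 L) count_size.
rewrite -size_filter; apply: uniq_leq_size; first by rewrite filter_uniq // iota_uniq.
by move=> x; rewrite mem_filter => /andP [].
Qed.

Lemma full_count (t m : nat) (S : seq nat) : 0 < t -> uniq S ->
  count (fun k => k %% t \in S) (iota 0 m) <= size S * (m %/ t) + minn (size S) (m %% t).
Proof.
move=> tp uS.
rewrite {1}(divn_eq m t) iotaD count_cat add0n leq_add //; last first.
  by apply: block_count => //; rewrite ltnW // ltn_pmod.
elim: (m %/ t) => [|q IH]; first by rewrite muln0.
rewrite mulSnr iotaD count_cat add0n mulnS [size S + _]addnC leq_add //.
by apply: leq_trans (@block_count t q t S uS (leqnn t)) _; rewrite geq_minl.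
Qed.

Lemma final_arith t l n q r : 0 < l -> l < t -> r < t ->
  (t - l) * (q * t + r) + t * l <= t * n -> (t - l) * q + minn (t - l) r < n.
Proof. move=> *; nia. Qed.
Import Order.TTheory GRing.Theory Num.Theory.
Local Open Scope ring_scope.
Theorem theorem2 (t l n : nat) (ht : (0 < t)%N) (hl : (0 < l)%N) (hn : (0 < n)%N)
  (hlt : (l < t)%N) :
  let y : int := ((t%:Z * (n%:Z - l%:Z + 1) - l%:Z) %/ (t%:Z - l%:Z))%Z in
  let eps : int := if odd `|y|%N then 1 else 0 in
  forall N : nat, is_R (@star_rel n) (t - l)%N t N -> y - eps < N%:Z.
Proof.
move=> y eps N [N0 [RP _]].
rewrite ltNge; apply/negP => HN.
have Hy : y * (t%:Z - l%:Z) <= t%:Z * (n%:Z - l%:Z + 1) - l%:Z.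
  by apply: lez_floor; apply/eqP; lia.
have epsE : eps = if odd `|y|%N then 1 else 0 by [].
clearbody eps y.
case: y Hy HN epsE => k Hy HN epsE; last by move: HN; rewrite epsE; case: ifP; lia.
have HN' : (N + odd k <= k)%N by move: HN; rewrite epsE /=; case: (odd k); lia.
clear HN epsE eps.
pose m := if odd N then N else N.-1.
have om : odd m.
  rewrite /m; case oN: (odd N) => //; by rewrite -subn1 oddB // oN.
have mk : (m + 1 <= k)%N.
  rewrite /m; case oN: (odd N); last lia.
  case ok : (odd k) HN'; first lia.
  move=> h; have : N != k by apply/eqP => e; rewrite e ok in oN.
  lia.
have Nm : (N <= m + 1)%N by rewrite /m; case: (odd N); lia.
have key : ((t - l) * m + t * l <= t * n)%N.
  have h1 : ((m + 1) * (t - l) <= k * (t - l))%N by rewrite leq_mul2r mk orbT.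
  nia.
Close Scope ring_scope.
pose colset (e : {set 'I_N}) : nat :=
  let s := (\sum_(x in e) val x)%N in
  (if [exists x in e, val x == m] then (2 * (s - m)) %% m else s %% m)%N.
have colE : forall a b : 'I_N, a != b -> colset [set a; b] = idx m a b.
  move=> a b ab; rewrite /colset /idx.
  rewrite big_setU1 /=; last by rewrite in_set1.
  rewrite big_set1.
  have -> : [exists x in [set a; b], val x == m] = (val a == m) || (val b == m).
    apply/existsP/orP => [[x /andP [] ]|[] h].
    - by rewrite !inE => /orP [] /eqP -> ->; [left|right].
    - by exists a; rewrite !inE eqxx h.
    - by exists b; rewrite !inE eqxx h orbT.
  by [].
pose c : edge_coloring N t := [ffun e => Ordinal (ltn_pmod (colset e) ht)].
have [f [finj Hcard]] := RP c.
have nN : (n.+1 <= N)%N by have := leq_card _ finj; rewrite !card_ord.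
have m0 : (0 < m)%N by lia.
set C := [set _ | _ in _] in Hcard.
pose S := map val (enum C).
have uS : uniq S by rewrite map_inj_uniq ?enum_uniq //; apply: val_inj.
have sS : size S = #|C| by rewrite size_map cardE.
pose P := fun k : nat => k %% t \in S.
pose g := fun i : 'I_n => idx m (f ord0) (f (lift ord0 i)).
have fle : forall x, (val (f x) <= m)%N by move=> x /=; have := ltn_ord (f x); lia.
have ginj : injective g.
  move=> i j /idx_inj; rewrite om fle fle fle => /(_ isT isT isT isT).
  have ne : forall i0 : 'I_n, val (f (lift ord0 i0)) != val (f ord0).
    by move=> i0; apply/eqP => /val_inj /finj /eqP; rewrite eq_sym (negbTE (neq_lift _ _)).
  rewrite !ne => /(_ isT isT) /val_inj /finj; exact: lift_inj.
pose K := map g (enum 'I_n).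
have uK : uniq K by rewrite map_inj_uniq ?enum_uniq.
have sK : size K = n by rewrite size_map size_enum_ord.
have subK : {subset K <= filter P (iota 0 m)}.
  move=> x /mapP [i _ ->]; rewrite mem_filter mem_iota add0n /g /idx; apply/andP; split; last first.
    by case: ifP => _; rewrite ltn_pmod.
  rewrite /P -/(idx m _ _).
  have ne : f ord0 != f (lift ord0 i).
    by apply/negP => /eqP /finj /eqP; rewrite (negbTE (neq_lift _ _)).
  have inC : c [set f ord0; f (lift ord0 i)] \in C.
    apply/imsetP; exists (ord0, lift ord0 i) => //.
    by rewrite inE /star_rel /=.
  have inE' : c [set f ord0; f (lift ord0 i)] \in enum C by rewrite mem_enum.
  have := map_f val inE'; rewrite -/S.
  by rewrite /c ffunE /= colE.
have := uniq_leq_size uK subK; rewrite sK size_filter => h.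
have := leq_trans h (@full_count t m S ht uS); rewrite sS => h2.
have h3 : (#|C| * (m %/ t) + minn #|C| (m %% t) <= (t - l) * (m %/ t) + minn (t - l) (m %% t))%N.
  by rewrite leq_add ?leq_mul2r ?Hcard ?orbT // leq_min geq_minr andbT (leq_trans (geq_minl _ _) Hcard).
have := @final_arith t l n (m %/ t) (m %% t) hl hlt (ltn_pmod m ht).
rewrite -divn_eq => /(_ key).
lia.
Qed.
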